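(* There exist a continuum $K$ and a pairwise disjoint sequence $(f_n)_{n\in\mathbb{N}}$ in $C_1(K)$ such that $K$ is an extension of $[0,1]$ by continuous functions (i.e. $K=[0,1]((g_n)_{n\in\mathbb{N}})$ for some pairwise disjoint sequence $(g_n)_{n\in\mathbb{N}}$ in $C_1([0,1])$) and the extension $K((f_n)_{n\in\mathbb{N}})$ is disconnected.
   Context: All spaces are Hausdorff. A continuum is a metrizable, compact, connected space. For a compact space $K$, $C_1(K)$ denotes the set of continuous functions $K\to[0,1]$; $f,g$ are disjoint if $f\cdot g=0$. For a real function $f$ on $K$, $supp(f)$ is the closure of $\{x\in K: f(x)\neq 0\}$. For a pairwise disjoint sequence $(f_n)_{n\in\mathbb{N}}$ in $C_1(K)$, let $D((f_n)_{n\in\mathbb{N}})$ be the union of all open sets $U\subseteq K$ such that $\{n: U\cap supp(f_n)\neq\emptyset\}$ is finite. The extension of $K$ by $(f_n)_{n\in\mathbb{N}}$, denoted $K((f_n)_{n\in\mathbb{N}})$, is the closure in $K\times[0,1]$ of the graph of the function $\sum_{n\in\mathbb{N}} f_n$ restricted to $D((f_n)_{n\in\mathbb{N}})$. *)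

(* Defs.v *)
From HB Require Import structures.
From mathcomp Require Import all_boot all_order all_algebra.
From mathcomp Require Import all_classical all_reals all_analysis.
Set Implicit Arguments. Unset Strict Implicit. Unset Printing Implicit Defensive.
Import Order.TTheory GRing.Theory Num.Theory.
Import numFieldTopology.Exports numFieldNormedType.Exports.
Local Open Scope classical_set_scope.
Local Open Scope ring_scope.

Section Ext.
Variables (R : realType) (T : topologicalType).

Definition unit_int : set R := [set x | 0 <= x <= 1].

Definition inC1 (K : set T) (f : T -> R) : Prop :=
  {within K, continuous f} /\ (forall x, K x -> 0 <= f x <= 1).

Definition pw_disjoint (K : set T) (f : nat -> T -> R) : Prop :=
  forall n m, n <> m -> forall x, K x -> f n x * f m x = 0.

Definition supp (K : set T) (f : T -> R) : set T :=
  K `&` closure [set x | K x /\ f x <> 0].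

(* D((f_n)): union of all (relatively) open U in K meeting only finitely many
   supports; open subsets of K are exactly the traces V `&` K, V open in T. *)
Definition Dset (K : set T) (f : nat -> T -> R) : set T :=
  [set x | K x /\ exists V : set T, [/\ open V, V x &
     finite_set [set n | (V `&` K `&` supp K (f n)) !=set0]]].

Definition sumf (f : nat -> T -> R) (x : T) : R :=
  limn (fun N => \sum_(i < N) f i x).

Definition extension (K : set T) (f : nat -> T -> R) : set (T * R) :=
  (K `*` unit_int) `&`
  closure [set p | Dset K f p.1 /\ p.2 = sumf f p.1].

End Ext.

(* Main.v *)
Require Import Defs.
From HB Require Import structures.
From mathcomp Require Import all_boot all_order all_algebra.
From mathcomp Require Import all_classical all_reals all_analysis.
From mathcomp Require Import ring lra zify.
Import Order.TTheory GRing.Theory Num.Theory.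
Import numFieldTopology.Exports numFieldNormedType.Exports.
Local Open Scope classical_set_scope.
Local Open Scope ring_scope.

Lemma andI {a b : bool} : a -> b -> a && b.
Proof. by move=> -> ->. Qed.

Section S.
Variable R : realType.
Definition nd (k : nat) : R := 2^-1 - (k.+1%:R)^-1.

Lemma nd_lt m n : (m < n)%N -> nd m < nd n.
Proof.
move=> mn; rewrite /nd ltrD2l ltrN2 ltf_pV2 ?posrE ?ltr0n //.
by rewrite ltr_nat ltnS.
Qed.

Lemma nd_le m n : (m <= n)%N -> nd m <= nd n.
Proof. rewrite leq_eqVlt => /orP[/eqP->//|/nd_lt/ltW//]. Qed.

Lemma nd_lt_half k : nd k < 2^-1.
Proof. by rewrite /nd ltrBlDr ltrDl invr_gt0 ltr0n. Qed.

Lemma nd1 : nd 1 = 0.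
Proof. by rewrite /nd subrr. Qed.

Definition hat (a b c x : R) : R :=
  Num.max 0 (Num.min ((x - a) / (b - a)) ((c - x) / (c - b))).

Section hat.
Variables (a b c : R) (ab : a < b) (bc : b < c).
Lemma hat_ge0 x : 0 <= hat a b c x.
Proof. by rewrite /hat le_max lexx. Qed.
Lemma hat_le1 x : hat a b c x <= 1.
Proof.
rewrite /hat ge_max ler01 /= ge_min.
have [xb|bx] := lerP x b.
  by apply/orP; left; rewrite ler_pdivrMr ?subr_gt0 // mul1r lerD2r.
by apply/orP; right; rewrite ler_pdivrMr ?subr_gt0 // mul1r lerD2l lerN2 ltW.
Qed.
Lemma hat_l x : x <= a -> hat a b c x = 0.
Proof.
move=> xa; rewrite /hat; apply/max_idPl; rewrite ge_min; apply/orP; left.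
by rewrite pmulr_lle0 ?invr_gt0 ?subr_gt0 // subr_le0.
Qed.
Lemma hat_r x : c <= x -> hat a b c x = 0.
Proof.
move=> xa; rewrite /hat; apply/max_idPl; rewrite ge_min; apply/orP; right.
by rewrite pmulr_lle0 ?invr_gt0 ?subr_gt0 // subr_le0.
Qed.
Lemma hat_up x : a <= x <= b -> hat a b c x = (x - a) / (b - a).
Proof.
move=> /andP[ax xb]; rewrite /hat.
have -> : Num.min ((x - a) / (b - a)) ((c - x) / (c - b)) = (x - a) / (b - a).
  apply/min_idPl; apply: (@le_trans _ _ 1).
    by rewrite ler_pdivrMr ?subr_gt0 // mul1r lerD2r.
  by rewrite ler_pdivlMr ?subr_gt0 // mul1r lerD2l lerN2.
by apply/max_idPr; rewrite divr_ge0 // subr_ge0 // ltW.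
Qed.
Lemma hat_down x : b <= x <= c -> hat a b c x = (c - x) / (c - b).
Proof.
move=> /andP[bx xc]; rewrite /hat.
have -> : Num.min ((x - a) / (b - a)) ((c - x) / (c - b)) = (c - x) / (c - b).
  apply/min_idPr; apply: (@le_trans _ _ 1).
    by rewrite ler_pdivrMr ?subr_gt0 // mul1r lerD2l lerN2.
  by rewrite ler_pdivlMr ?subr_gt0 // mul1r lerD2r.
by apply/max_idPr; rewrite divr_ge0 // subr_ge0 // ltW.
Qed.
End hat.

Lemma hat_cont a b c : continuous (hat a b c).
Proof.
move=> x; rewrite /hat.
apply: (@continuous_max _ _ (fun _ => 0) (fun x => Num.min ((x - a) / (b - a)) ((c - x) / (c - b)))).
  exact: cvg_cst.
apply: (@continuous_min _ _ (fun x => (x - a) / (b - a)) (fun x => (c - x) / (c - b))).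
  by apply: cvgMl; apply: cvgB; [exact: cvg_id|exact: cvg_cst].
by apply: cvgMl; apply: cvgB; [exact: cvg_cst|exact: cvg_id].
Qed.


Definition h k x := hat (nd k) (nd k.+1) (nd k.+2) x.
Lemma nd_S k : nd k < nd k.+1. Proof. exact: nd_lt. Qed.
Lemma h_ge0 k x : 0 <= h k x. Proof. exact: hat_ge0. Qed.
Lemma h_le1 k x : h k x <= 1. Proof. by apply: hat_le1; apply: nd_S. Qed.
Lemma h_cont k : continuous (h k). Proof. exact: hat_cont. Qed.
Lemma h_out k x : x <= nd k \/ nd k.+2 <= x -> h k x = 0.
Proof. by case=> ?; [apply: hat_l|apply: hat_r]; rewrite ?nd_S. Qed.
Lemma h_nz k x : h k x != 0 -> nd k < x < nd k.+2.
Proof.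
move=> hn; apply/andP; split; rewrite ltNge; apply/negP => H; move/eqP: hn; apply.
  by apply: h_out; left.
by apply: h_out; right.
Qed.
Lemma h_disj k l x : (k.+1 < l)%N -> h k x * h l x = 0.
Proof.
move=> kl; apply/eqP; rewrite mulf_eq0; apply: contraT; rewrite negb_or => /andP[/h_nz/andP[_ a] /h_nz/andP[b _]].
by have := lt_trans b a; rewrite ltNge nd_le.
Qed.
Lemma h_l k x : nd k.+1 <= x <= nd k.+2 -> h k x = (nd k.+2 - x) / (nd k.+2 - nd k.+1).
Proof. by move=> H; apply: hat_down => //; exact: nd_S. Qed.
Lemma h_r k x : nd k <= x <= nd k.+1 -> h k x = (x - nd k) / (nd k.+1 - nd k).
Proof. by move=> H; apply: hat_up => //; exact: nd_S. Qed.
Lemma h_pair k x : nd k.+1 <= x <= nd k.+2 -> h k x + h k.+1 x = 1.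
Proof.
move=> /andP[a b]; rewrite h_l ?a ?b // h_r ?a ?b //.
have : nd k.+2 - nd k.+1 != 0 by rewrite subr_eq0 gt_eqF // nd_S.
move=> nz; rewrite -mulrDl (_ : nd k.+2 - x + (x - nd k.+1) = nd k.+2 - nd k.+1).
  by rewrite mulfV.
by ring.
Qed.
Lemma h_other k j x : nd k.+1 <= x <= nd k.+2 -> j != k -> j != k.+1 -> h j x = 0.
Proof.
move=> /andP[a b] jk jk1; apply: h_out.
have [lt|ge] := ltnP j k.
  by right; apply: le_trans a; apply: nd_le.
have : (k.+1 < j)%N by rewrite ltn_neqAle eq_sym jk1 /= ltn_neqAle eq_sym jk ge.
by move=> kj; left; apply: le_trans b _; apply: nd_le.
Qed.
Lemma h_half k x : 2^-1 <= x -> h k x = 0.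
Proof. by move=> hx; apply: h_out; right; apply: le_trans hx; apply/ltW/nd_lt_half. Qed.

Lemma psum_single (a : nat -> R) (i0 : nat) : (forall i : nat, i != i0 -> a i = 0) ->
  forall N, \sum_(i < N) a i = if (i0 < N)%N then a i0 else 0.
Proof.
move=> H; elim=> [|N IH]; first by rewrite big_ord0.
rewrite big_ord_recr /= IH.
have [hlt|hgt|->] := ltngtP i0 N.
- rewrite (H N); last by rewrite neq_ltn hlt orbT.
  by rewrite addr0 ltnS (ltnW hlt).
- rewrite (H N); last by rewrite neq_ltn hgt.
  by rewrite add0r ltnS leqNgt hgt.
- by rewrite ltnSn add0r.
Qed.
Lemma lim_single (a : nat -> R) (i0 : nat) : (forall i : nat, i != i0 -> a i = 0) ->
  limn (fun N => \sum_(i < N) a i) = a i0.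
Proof.
move=> H; apply: lim_near_cst; first exact: Rhausdorff. near=> N.
rewrite (@psum_single a i0 H) ifT //; near: N.
by exists i0.+1.
Unshelve. all: by end_near.
Qed.
Lemma lim_disj (a : nat -> R) : (forall i j : nat, i != j -> a i * a j = 0) ->
  exists i0, limn (fun N => \sum_(i < N) a i) = a i0 /\
     forall i : nat, i != i0 -> a i = 0.
Proof.
move=> H; have [[i0 nz]|] := pselect (exists i0, a i0 != 0).
  have H' : forall i, i != i0 -> a i = 0.
    by move=> i ii; move: (H i i0 ii) => /eqP; rewrite mulf_eq0 (negPf nz) orbF => /eqP.
  by exists i0; split => //; apply: lim_single.
move=> nz; have H' : forall i, a i = 0.
  by move=> i; apply: contrapT => ne; apply: nz; exists i; apply/eqP.
by exists 0%N; split => //; apply: lim_single.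
Qed.
Lemma psum_tail (a : nat -> R) M : (forall i, (M <= i)%N -> a i = 0) ->
  forall N, (M <= N)%N -> \sum_(i < N) a i = \sum_(i < M) a i.
Proof.
move=> H; elim=> [|N IH]; first by rewrite leqn0 => /eqP ->.
rewrite leq_eqVlt => /orP[/eqP<-//|]; rewrite ltnS => MN.
by rewrite big_ord_recr /= IH // H // addr0.
Qed.
Lemma lim_tail (a : nat -> R) M : (forall i, (M <= i)%N -> a i = 0) ->
  limn (fun N => \sum_(i < N) a i) = \sum_(i < M) a i.
Proof.
move=> H; apply: lim_near_cst; first exact: Rhausdorff. near=> N.
rewrite (@psum_tail a M H) //; near: N.
by exists M.
Unshelve. all: by end_near.
Qed.


Definition gg (n : nat) (x : R) : R := h (2 * n)%N.+1 x.
Definition phi (n : nat) (x : R) : R := h (2 * n)%N x.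
Definition G (x : R) : R := sumf gg x.
Definition Phi (x : R) : R := sumf phi x.

Lemma gg_disj n m x : n != m -> gg n x * gg m x = 0.
Proof.
rewrite neq_ltn => /orP[] nm; last rewrite mulrC; apply: h_disj; lia.
Qed.
Lemma phi_disj n m x : n != m -> phi n x * phi m x = 0.
Proof.
rewrite neq_ltn => /orP[] nm; last rewrite mulrC; apply: h_disj; lia.
Qed.

Lemma G_range x : 0 <= G x <= 1.
Proof.
rewrite /G /Phi /sumf; have [i [-> _]] := @lim_disj (fun n => gg n x) (fun n m nm => @gg_disj n m x nm).
by rewrite h_ge0 h_le1.
Qed.
Lemma Phi_range x : 0 <= Phi x <= 1.
Proof.
rewrite /G /Phi /sumf; have [i [-> _]] := @lim_disj (fun n => phi n x) (fun n m nm => @phi_disj n m x nm).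
by rewrite h_ge0 h_le1.
Qed.

Lemma G_half x : 2^-1 <= x -> G x = 0.
Proof.
move=> hx; rewrite /G /sumf (@lim_single (fun n => gg n x) 0%N).
  exact: h_half.
by move=> i _; exact: h_half.
Qed.
Lemma Phi_half x : 2^-1 <= x -> Phi x = 0.
Proof.
move=> hx; rewrite /Phi /sumf (@lim_single (fun n => phi n x) 0%N).
  exact: h_half.
by move=> i _; exact: h_half.
Qed.

Lemma vals_even m x : nd (2 * m)%N.+1 <= x <= nd (2 * m)%N.+2 ->
  G x = h (2 * m)%N.+1 x /\ Phi x = h (2 * m)%N x.
Proof.
move=> hx; split.
  rewrite /G /sumf (@lim_single (fun n => gg n x) m) // => i im.
  rewrite /gg /phi; apply: (@h_other _ _ _ hx); lia.
rewrite /Phi /sumf (@lim_single (fun n => phi n x) m) // => i im.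
rewrite /gg /phi; apply: (@h_other _ _ _ hx); lia.
Qed.

Lemma vals_odd m x : nd (2 * m)%N.+2 <= x <= nd (2 * m)%N.+3 ->
  G x = h (2 * m)%N.+1 x /\ Phi x = h (2 * m.+1)%N x.
Proof.
move=> hx; split.
  rewrite /G /sumf (@lim_single (fun n => gg n x) m) // => i im.
  rewrite /gg /phi; apply: (@h_other (2 * m)%N.+1 _ _ hx); lia.
rewrite /Phi /sumf (@lim_single (fun n => phi n x) m.+1) // => i im.
rewrite /gg /phi; apply: (@h_other (2 * m)%N.+1 _ _ hx); lia.
Qed.


Lemma nd_large x : x < 2^-1 -> exists k, x < nd k.
Proof.
move=> /ltr_add_invr[k hk]; exists k; rewrite /nd ltrBrDr; exact: hk.
Qed.

Lemma sum1 x : nd 1 <= x < 2^-1 -> G x + Phi x = 1.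
Proof.
move=> /andP[x1 /nd_large[k xk]].
have : x <= nd (2 * k)%N.+1 by apply/ltW/(lt_le_trans xk)/nd_le; lia.
move: x x1 {xk}; elim: k => [|m IH] x x1 xm.
  have [-> ->] := @vals_even 0 x (andI x1 (le_trans xm (ltW (nd_S _)))).
  by rewrite addrC; apply: h_pair; rewrite x1 /= (le_trans xm) // ltW // nd_S.
have [xle|xgt] := lerP x (nd (2 * m)%N.+1); first exact: IH.
have [xle2|xgt2] := lerP x (nd (2 * m)%N.+2).
  have [-> ->] := @vals_even m x (andI (ltW xgt) xle2).
  by rewrite addrC; apply: h_pair; rewrite (ltW xgt) xle2.
have xle3 : x <= nd (2 * m)%N.+3 by move: xm; rewrite (_ : (2 * m.+1)%N.+1 = (2 * m)%N.+3) //; lia.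
have [-> ->] := @vals_odd m x (andI (ltW xgt2) xle3).
rewrite (_ : (2 * m.+1)%N = (2 * m)%N.+2); last lia.
by apply: h_pair; rewrite (ltW xgt2) xle3.
Qed.

Lemma G_loc M x : x <= nd (2 * M)%N.+1 -> G x = \sum_(i < M) gg i x.
Proof.
move=> xM; rewrite /G /sumf (@lim_tail (fun n => gg n x) M) // => i iM.
rewrite /gg; apply: h_out; left; apply: (le_trans xM); apply: nd_le; lia.
Qed.
Lemma Phi_loc M x : x <= nd (2 * M)%N -> Phi x = \sum_(i < M) phi i x.
Proof.
move=> xM; rewrite /Phi /sumf (@lim_tail (fun n => phi n x) M) // => i iM.
rewrite /phi; apply: h_out; left; apply: (le_trans xM); apply: nd_le; lia.
Qed.

Lemma psum_cont (a : nat -> R -> R) : (forall i, continuous (a i)) ->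
  forall N, continuous (fun x => \sum_(i < N) a i x).
Proof.
move=> ca; elim=> [|N IH].
  have -> : (fun x => \sum_(i < 0) a i x) = fun=> 0.
    by apply: funext => y; rewrite big_ord0.
  by move=> x; exact: cvg_cst.
have -> : (fun x => \sum_(i < N.+1) a i x) = (fun x => \sum_(i < N) a i x + a N x).
  by apply: funext => y; rewrite big_ord_recr.
move=> x; apply: cvgD; [exact: IH|exact: ca].
Qed.

Lemma G_cont x : x < 2^-1 -> {for x, continuous G}.
Proof.
move=> /nd_large[k xk].
have xk' : x < nd (2 * k)%N.+1 by apply: (lt_le_trans xk); apply: nd_le; lia.
have nb : \forall y \near x, (fun y => \sum_(i < k) gg i y) y = G y.
  have : nbhs x [set y | y < nd (2 * k)%N.+1].
    by apply: open_nbhs_nbhs; split => //; exact: open_lt.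
  by apply: filterS => y /= /ltW /G_loc ->.
apply: cvg_trans (near_eq_cvg nb) _.
rewrite (@G_loc k x (ltW xk')).
by apply: psum_cont => i; exact: h_cont.
Qed.


End S.

Section topo.
Context {R : realType} {T : topologicalType}.

Lemma cont_fst {U V : topologicalType} : continuous (@fst U V).
Proof. by move=> p; exact: cvg_fst. Qed.
Lemma cont_snd {U V : topologicalType} : continuous (@snd U V).
Proof. by move=> p; exact: cvg_snd. Qed.

Lemma closed_eqf (u v : T -> R) : continuous u -> continuous v ->
  closed [set q | u q = v q].
Proof.
move=> cu cv.
have -> : [set q | u q = v q] = (fun q => u q - v q) @^-1` [set x | x = 0].
  by apply/seteqP; split => q /=; [move=> ->; rewrite subrr|move/eqP; rewrite subr_eq0 => /eqP].
apply: preimage_closed; last exact: closed_eq.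
by move=> q _; apply: cvgB; [exact: cu|exact: cv].
Qed.
Lemma closed_lef (u v : T -> R) : continuous u -> continuous v ->
  closed [set q | u q <= v q].
Proof.
move=> cu cv.
have -> : [set q | u q <= v q] = (fun q => u q - v q) @^-1` [set x | x <= 0].
  by apply/seteqP; split => q /=; rewrite subr_le0.
apply: preimage_closed; last exact: closed_le.
by move=> q _; apply: cvgB; [exact: cu|exact: cv].
Qed.
Lemma open_ltf (u : T -> R) c : continuous u -> open [set q | u q < c].
Proof.
move=> cu; have -> : [set q | u q < c] = u @^-1` [set x | x < c] by [].
by apply: open_comp; [move=> q _; exact: cu|exact: open_lt].
Qed.
Lemma open_gtf (u : T -> R) c : continuous u -> open [set q | c < u q].
Proof.
move=> cu; have -> : [set q | c < u q] = u @^-1` [set x | c < x] by [].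
by apply: open_comp; [move=> q _; exact: cu|exact: open_gt].
Qed.

Lemma clos_open_sub (A W : set T) : open W -> closure A `&` W `<=` closure (A `&` W).
Proof.
move=> oW p [cAp Wp] B nB.
have nBW : nbhs p (B `&` W) by apply: filterI => //; apply: open_nbhs_nbhs.
have [q [Aq [Bq Wq]]] := cAp _ nBW.
by exists q.
Qed.

Lemma closure_sub_closed (A C : set T) : closed C -> A `<=` C -> closure A `<=` C.
Proof. by move=> cC AC; rewrite (closure_id C).1 //; exact: closureS. Qed.

Lemma supp_sub (K : set T) (f : T -> R) (C : set T) : closed C ->
  (forall x, K x -> f x != 0 -> C x) -> supp K f `<=` C.
Proof.
move=> cC H x [_]; apply: closure_sub_closed => // y [Ky /eqP fy].
exact: H.
Qed.

End topo.

Section main.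
Variable R : realType.
Local Notation G := (@G R).
Local Notation Phi := (@Phi R).
Local Notation gg := (@gg R).
Local Notation phi := (@phi R).
Local Notation nd := (@nd R).
Local Notation h := (@h R).

Definition Kc : set (R * R) := extension (@unit_int R) gg.
Definition Gam : set (R * R) := [set p | Dset (@unit_int R) gg p.1 /\ p.2 = sumf gg p.1].

Lemma Kc_sub p : Kc p -> (0 <= p.1 <= 1) /\ (0 <= p.2 <= 1).
Proof. by case=> -[]. Qed.

Lemma Kc_left p : Kc p -> p.1 < 2^-1 -> p.2 = G p.1.
Proof.
move=> [_ cp] /nd_large[k xk].
have xk' : p.1 < nd (2 * k)%N.+1 by apply: (lt_le_trans xk); apply: nd_le; lia.
set W := [set q : R * R | q.1 < nd (2 * k)%N.+1].
have oW : open W by apply: open_ltf; exact: cont_fst.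
set C := [set q : R * R | q.2 = (fun q : R * R => \sum_(i < k) gg i q.1) q].
have cC : closed C.
  apply: closed_eqf; first exact: cont_snd.
  move=> q; apply: (@continuous_comp _ _ _ fst (fun x => \sum_(i < k) gg i x)).
    exact: cont_fst.
  by apply: psum_cont => i; exact: h_cont.
have : C p.
  apply: (@closure_sub_closed _ _ C cC _ _ (@clos_open_sub _ _ W oW _ (conj cp xk'))).
  move=> q [[_ e] Wq]; rewrite /C /= e.
  by have := @G_loc R k q.1 (ltW Wq).
by rewrite /C /= -(@G_loc R k p.1 (ltW xk')).
Qed.

Lemma Kc_right p : Kc p -> 2^-1 < p.1 -> p.2 = 0.
Proof.
move=> [_ cp] xh.
set W := [set q : R * R | 2^-1 < q.1].
have oW : open W by apply: open_gtf; exact: cont_fst.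
set C := [set q : R * R | q.2 = (fun=> 0) q].
have cC : closed C.
  by apply: closed_eqf; [exact: cont_snd|move=> q; exact: cvg_cst].
have : C p.
  apply: (@closure_sub_closed _ _ C cC _ _ (@clos_open_sub _ _ W oW _ (conj cp xh))).
  move=> q [[_ e] Wq]; rewrite /C /= e.
  by apply: (@G_half R); apply: ltW.
by [].
Qed.


Lemma Dg x : 0 <= x <= 1 -> x != 2^-1 -> Dset (@unit_int R) gg x.
Proof.
move=> x01 xh; split => //.
have [xl|xg] := ltP x (2^-1); last first.
  have xg' : 2^-1 < x by rewrite lt_neqAle eq_sym xh xg.
  exists [set y | 2^-1 < y]; split; [exact: open_gt|exact: xg'|].
  apply: (@sub_finite_set _ _ set0); last exact: finite_set0.
  move=> n [y [[Vy _] sy]].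
  have : [set y | y <= nd (2 * n)%N.+3] y.
    apply: (@supp_sub R _ _ (gg n) _ (@closed_le R (nd (2 * n)%N.+3)) _ y sy).
    by move=> z _ /h_nz/andP[_ /ltW].
  move=> /= yle; have := lt_le_trans Vy yle; rewrite ltNge => /negP; apply.
  exact/ltW/nd_lt_half.
have [k xk] := @nd_large R x xl.
exists [set y | y < nd k]; split; [exact: open_lt|exact: xk|].
apply: (@sub_finite_set _ _ `I_k); last exact: finite_II.
move=> n [y [[Vy _] sy]].
have : [set y | nd (2 * n)%N.+1 <= y] y.
  apply: (@supp_sub R _ _ (gg n) _ (@closed_ge R (nd (2 * n)%N.+1)) _ y sy).
  by move=> z _ /h_nz/andP[/ltW].
move=> /= yle; have := le_lt_trans yle Vy => ndlt.
rewrite /= ltnNge; apply/negP => kn; move: ndlt; rewrite ltNge => /negP; apply.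
apply: nd_le; lia.
Qed.

Lemma Kc_pt x : 0 <= x <= 1 -> x != 2^-1 -> Kc (x, G x).
Proof.
move=> x01 xh; split; first by split => //; exact: G_range.
by apply: subset_closure; split => //; exact: Dg.
Qed.

Lemma I01_closed : closed (@unit_int R `*` @unit_int R).
Proof.
have -> : (@unit_int R `*` @unit_int R) =
  [set p : R * R | (fun=> 0) p <= fst p] `&` [set p | fst p <= (fun=> 1) p] `&`
  ([set p : R * R | (fun=> 0) p <= snd p] `&` [set p | snd p <= (fun=> 1) p]).
  by apply/seteqP; split => p /=; [move=> [/andP[-> ->] /andP[-> ->]]|
    move=> [[a b] [c d]]; rewrite /unit_int /= a b c d].
have c0 : continuous (fun _ : R * R => (0 : R)) by move=> ?; exact: cvg_cst.
have c1 : continuous (fun _ : R * R => (1 : R)) by move=> ?; exact: cvg_cst.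
by apply: closedI; apply: closedI; apply: closed_lef => //;
  solve [exact: cont_fst|exact: cont_snd].
Qed.

Lemma Kc_closed : closed Kc.
Proof. by apply: closedI; [exact: I01_closed|exact: closed_closure]. Qed.

Lemma Kc_compact : compact Kc.
Proof.
apply: (@subclosed_compact _ _ (@unit_int R `*` @unit_int R) Kc_closed); last by move=> p [].
have -> : @unit_int R = `[0, 1]%classic.
  by apply/seteqP; split => x /=; rewrite in_itv.
by apply: compact_setX; exact: segment_compact.
Qed.


Lemma closure_seq {T : topologicalType} (A : set T) (u : nat -> T) p :
  (forall n, A (u n)) -> u @ \oo --> p -> closure A p.
Proof.
move=> Au up B nB; move: (up _ nB) => -[N _ HN].
by exists (u N); split; [exact: Au|apply: HN => /=].
Qed.

Lemma G_cont_r x : 2^-1 < x -> {for x, continuous G}.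
Proof.
move=> xh; apply: (near_cst_continuous 0).
have : nbhs x [set y | 2^-1 < y] by apply: open_nbhs_nbhs; split => //; exact: open_gt.
by apply: filterS => y /= /ltW; exact: G_half.
Qed.

Lemma G_nodes n : G (nd (2 * n)%N.+1) = 0.
Proof.
have [-> _] := @vals_even R n (nd (2 * n)%N.+1) (andI (lexx _) (ltW (nd_S _ _))).
by apply: h_out; left.
Qed.

Lemma nd_harm n : nd (2 * n)%N.+1 = 2^-1 - 2^-1 * harmonic n.
Proof.
rewrite /nd /harmonic /=; congr (_ - _); rewrite -invfM; congr (_^-1).
by rewrite (_ : (2 * n)%N.+2 = (2 * n.+1)%N) ?natrM //; lia.
Qed.

Lemma harm_cvg (a b : R) : (fun n => a + b * harmonic n) @ \oo --> a.
Proof.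
have : (fun n => a + b * harmonic n) @ \oo --> a + b * 0.
  apply: cvgD; first exact: cvg_cst.
  by apply: cvgM; [exact: cvg_cst|exact: cvg_harmonic].
by rewrite mulr0 addr0.
Qed.

Lemma harm_le1 n : 0 < harmonic n :> R /\ harmonic n <= 1 :> R.
Proof.
split; first exact: harmonic_gt0.
by rewrite /harmonic /= invr_le1 // ?ler1n // unitfE pnatr_eq0.
Qed.

Definition fG (x : R) : R * R := (x, G x).
Definition Lset : set R := [set x | 0 <= x < 2^-1].
Definition Rset : set R := [set x | 2^-1 < x <= 1].

Lemma Kc_conn : connected Kc.
Proof.
have p0L : closure (fG @` Lset) (2^-1, 0).
  apply: (@closure_seq _ _ (fun n => (nd (2 * n)%N.+1, 0))).
    move=> n; exists (nd (2 * n)%N.+1); last by rewrite /fG G_nodes.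
    rewrite /Lset /= nd_lt_half andbT.
    by rewrite -(nd1 R); apply: nd_le.
  apply: (@cvg_pair _ _ _ _ (nbhs (2^-1 : R)) (nbhs (0 : R))); last exact: cvg_cst.
  have -> : (fun n => nd (2 * n)%N.+1) = (fun n => 2^-1 + (- 2^-1) * harmonic n).
    by apply: funext => n; rewrite nd_harm mulNr.
  exact: harm_cvg.
have p0R : closure (fG @` Rset) (2^-1, 0).
  apply: (@closure_seq _ _ (fun n => ((2^-1 + 2^-1 * harmonic n : R), (0 : R)))).
    move=> n; have [h0 h1] := harm_le1 n.
    exists (2^-1 + 2^-1 * harmonic n); last first.
      by rewrite /fG G_half // lerDl mulr_ge0 // ltW.
    have t2 : (2^-1 : R) + 2^-1 = 1 by rewrite [RHS](splitr 1) mul1r.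
    have t0 : (0 : R) < 2^-1 by rewrite invr_gt0.
    move: t2 t0 h0 h1; rewrite /Rset; set t := (2^-1 : R); set hn := harmonic n.
    by move=> t2 t0 h0 h1; apply/andP; split; nra.
  by apply: (@cvg_pair _ _ _ _ (nbhs (2^-1 : R)) (nbhs (0 : R))); [exact: harm_cvg|exact: cvg_cst].
have cHL : connected (closure (fG @` Lset)).
  apply: connected_closure; apply: connected_continuous_connected.
    apply/connected_intervalP => a b /= /andP[a0 ah] /andP[b0 bh] z /andP[az zb].
    by apply/andP; split; [exact: le_trans az|exact: le_lt_trans bh].
  apply: continuous_in_subspaceT => x; rewrite inE => /= /andP[_ xh].
  by apply: (@cvg_pair _ _ _ _ (nbhs x) (nbhs (G x))); [exact: cvg_id|exact: G_cont].
have cHR : connected (closure (fG @` Rset)).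
  apply: connected_closure; apply: connected_continuous_connected.
    apply/connected_intervalP => a b /= /andP[a0 ah] /andP[b0 bh] z /andP[az zb].
    by apply/andP; split; [exact: lt_le_trans az|exact: le_trans bh].
  apply: continuous_in_subspaceT => x; rewrite inE => /= /andP[xh _].
  by apply: (@cvg_pair _ _ _ _ (nbhs x) (nbhs (G x))); [exact: cvg_id|exact: G_cont_r].
have -> : Kc = closure (fG @` Lset) `|` closure (fG @` Rset).
  apply/seteqP; split.
    move=> p [_ cp]; move: p cp; apply: closure_sub_closed.
      by apply: closedU; exact: closed_closure.
    move=> q [[q01 _] e]; have [ql|qg|qe] := ltgtP q.1 (2^-1).
    - left; apply: subset_closure; exists q.1; first by rewrite /Lset /= ql andbT; case/andP: q01.
      by clear -e; case: q e => a b /= ->.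
    - right; apply: subset_closure; exists q.1; first by rewrite /Rset /= qg; case/andP: q01.
      by clear -e; case: q e => a b /= ->.
    - right; have -> : q = (2^-1, 0) by clear -qe e; case: q qe e => a b /= -> ->; have := @G_half R (2^-1) (lexx _); rewrite /G => ->.
      exact: p0R.
  rewrite subUset; split; apply: closure_sub_closed; try exact: Kc_closed.
    move=> _ [x /andP[x0 xh] <-]; apply: Kc_pt; last by rewrite lt_eqF.
    by rewrite x0 /= (le_trans (ltW xh)) // invr_le1 // ?ler1n // unitfE pnatr_eq0.
  move=> _ [x /andP[xh x1] <-]; apply: Kc_pt; last by rewrite gt_eqF.
  by rewrite x1 andbT; apply: le_trans (ltW xh); rewrite invr_ge0.
apply: connectedU => //; exists (2^-1, 0); split; [exact: p0L|exact: p0R].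
Qed.


Definition ff (n : nat) (p : R * R) : R := phi n p.1.
Definition Ext := extension Kc ff.

Lemma ff_C1 n : inC1 Kc (ff n).
Proof.
split; last by move=> p _; rewrite /ff /phi h_ge0 h_le1.
apply: continuous_subspaceT => p.
apply: (@continuous_comp _ _ _ fst (phi n)); first exact: cont_fst.
exact: h_cont.
Qed.

Lemma ff_disj : pw_disjoint Kc ff.
Proof.
move=> n m /eqP nm p _; exact: phi_disj.
Qed.

Lemma cont_fst1 : continuous (fun q : (R * R) * R => q.1.1).
Proof.
move=> q; apply: (@continuous_comp _ _ _ fst fst); exact: cont_fst.
Qed.
Lemma cont_sum12 : continuous (fun q : (R * R) * R => q.1.2 + q.2).
Proof.
move=> q; apply: cvgD; last exact: cont_snd.
apply: (@continuous_comp _ _ _ fst snd); [exact: cont_fst|exact: cont_snd].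
Qed.

Definition C1 : set ((R * R) * R) := [set q | q.1.1 <= 2^-1] `&` [set q | q.1.2 + q.2 = 1].
Definition C2 : set ((R * R) * R) := [set q | 2^-1 <= q.1.1] `&` [set q | q.1.2 + q.2 = 0].

Lemma C1_closed : closed C1.
Proof.
have cc : forall c : R, continuous (fun _ : (R * R) * R => c) by move=> c q; exact: cvg_cst.
apply: closedI.
  exact: (@closed_lef _ _ (fun q => q.1.1) (fun=> 2^-1) cont_fst1 (cc _)).
exact: (@closed_eqf _ _ (fun q => q.1.2 + q.2) (fun=> 1) cont_sum12 (cc _)).
Qed.
Lemma C2_closed : closed C2.
Proof.
have cc : forall c : R, continuous (fun _ : (R * R) * R => c) by move=> c q; exact: cvg_cst.
apply: closedI.
  exact: (@closed_lef _ _ (fun=> 2^-1) (fun q => q.1.1) (cc _) cont_fst1).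
exact: (@closed_eqf _ _ (fun q => q.1.2 + q.2) (fun=> 0) cont_sum12 (cc _)).
Qed.
Lemma C12_disj : C1 `&` C2 = set0.
Proof.
apply/seteqP; split => // q [[_ /= e1] [_ /= e2]]; move: e1; rewrite e2.
by move/eqP; rewrite eq_sym oner_eq0.
Qed.


Lemma supp_ff_ge n : supp Kc (ff n) `<=` [set q | nd (2 * n)%N <= q.1].
Proof.
apply: supp_sub.
  apply: (@closed_lef _ _ (fun=> nd (2 * n)%N) fst _ cont_fst).
  by move=> q; exact: cvg_cst.
by move=> q _ /h_nz/andP[/ltW].
Qed.
Lemma supp_ff_le n : supp Kc (ff n) `<=` [set q | q.1 <= nd (2 * n)%N.+2].
Proof.
apply: supp_sub.
  apply: (@closed_lef _ _ fst (fun=> nd (2 * n)%N.+2) cont_fst).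
  by move=> q; exact: cvg_cst.
by move=> q _ /h_nz/andP[_ /ltW].
Qed.

Lemma G0 : G 0 = 0.
Proof. by have := G_nodes 0; rewrite muln0 nd1. Qed.
Lemma Phi0 : Phi 0 = 1.
Proof.
have := @sum1 R 0; rewrite nd1 lexx invr_gt0 ltr0n G0 add0r; exact.
Qed.

Lemma half_neq0 : (0 : R) != 2^-1.
Proof. by rewrite eq_sym invr_eq0 pnatr_eq0. Qed.
Lemma half_lt1 : (2^-1 : R) < 1.
Proof. by rewrite invf_lt1 ?ltr0n // ltr1n. Qed.
Lemma half_neq1 : (1 : R) != 2^-1.
Proof. by rewrite gt_eqF // half_lt1.
Qed.

Lemma Df0 : Dset Kc ff (0, G 0).
Proof.
split; first by apply: Kc_pt; [rewrite lexx ler01|exact: half_neq0].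
exists [set q | q.1 < nd 2]; split.
- by apply: open_ltf; exact: cont_fst.
- by rewrite /= -(nd1 R); apply: nd_lt.
- apply: (@sub_finite_set _ _ `I_1); last exact: finite_II.
  move=> n [y [[Vy _] /supp_ff_ge sy]] /=.
  have := le_lt_trans sy Vy; rewrite ltNge; apply: contraNT; rewrite -leqNgt => n1.
  apply: nd_le; lia.
Qed.

Lemma G1 : G 1 = 0.
Proof. by rewrite G_half // ltW // half_lt1. Qed.

Lemma Kc10 : Kc (1, 0).
Proof. by rewrite -G1; apply: Kc_pt; [rewrite lexx ler01|exact: half_neq1]. Qed.

Lemma Df1 : Dset Kc ff (1, 0).
Proof.
split; first exact: Kc10.
exists [set q | 2^-1 < q.1]; split.
- by apply: open_gtf; exact: cont_fst.
- exact: half_lt1.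
- apply: (@sub_finite_set _ _ set0); last exact: finite_set0.
  move=> n [y [[Vy _] /supp_ff_le sy]] /=.
  have := lt_le_trans Vy sy; rewrite ltNge => /negP; apply.
  exact/ltW/nd_lt_half.
Qed.

Lemma Dmid t : 0 < t < 1 -> ~ Dset Kc ff (2^-1, t).
Proof.
move=> /andP[t0 t1] [_ [V [oV Vp fin]]].
pose a := fun n : nat => nd (2 * n)%N.+1.
pose b := fun n : nat => nd (2 * n)%N.+2.
pose x := fun n => a n + t * (b n - a n).
have ab n : a n < b n by exact: nd_S.
have xa n : a n <= x n by have := ab n; rewrite /x; nra.
have xb n : x n <= b n by have := ab n; rewrite /x; nra.
have xab n : nd (2 * n)%N.+1 <= x n <= nd (2 * n)%N.+2 by rewrite xa xb.
have hx n : G (x n) = t /\ phi n (x n) = 1 - t.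
  have [-> _] := @vals_even R n (x n) (xab n).
  have nz : b n - a n != 0 by rewrite subr_eq0 gt_eqF // ab.
  split.
    rewrite h_r // /x -/(a n) -/(b n); field; exact: nz.
  rewrite /phi h_l // /x -/(a n) -/(b n); field; exact: nz.
have xh n : x n < 2^-1 by apply: le_lt_trans (xb n) _; exact: nd_lt_half.
have inK n : Kc (x n, t).
  rewrite -{1}(hx n).1; apply: Kc_pt; last by rewrite lt_eqF.
  apply/andP; split; last by apply: le_trans (ltW (xh n)) _; apply/ltW/half_lt1.
  apply: le_trans (xa n); rewrite -(nd1 R); apply: nd_le; lia.
have inS n : supp Kc (ff n) (x n, t).
  split; first exact: inK.
  apply: subset_closure; split; first exact: inK.
  by rewrite /ff /= (hx n).2; apply/eqP; rewrite subr_eq0 gt_eqF.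
have cv : (fun n => (x n, t)) @ \oo --> ((2^-1 : R), t).
  apply: (@cvg_pair _ _ _ _ (nbhs (2^-1 : R)) (nbhs t)); last exact: cvg_cst.
  apply: (@squeeze_cvgr _ _ _ _ a (fun=> 2^-1) x).
  - by near=> n; rewrite xa /= ltW // xh.
  - have -> : a = (fun n => 2^-1 + (- 2^-1) * harmonic n).
      by apply: funext => n; rewrite /a nd_harm mulNr.
    exact: harm_cvg.
  - exact: cvg_cst.
have nV : nbhs ((2^-1 : R), t) V by apply: open_nbhs_nbhs.
move: (cv _ nV) => -[N _ HN].
have sub : [set n | (N <= n)%N] `<=`
    [set n | (V `&` Kc `&` supp Kc (ff n)) !=set0].
  move=> n /= Nn; exists (x n, t); split; [split; [exact: HN|exact: inK]|exact: inS].
apply: infinite_nat.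
have -> : [set: nat] = `I_N `|` [set n | (N <= n)%N].
  by apply/seteqP; split => n //= _; case: (ltnP n N) => H; [left|right].
by rewrite finite_setU; split; [exact: finite_II|exact: sub_finite_set sub fin].
Unshelve. all: by end_near.
Qed.


Lemma Gamf_sub : [set q | Dset Kc ff q.1 /\ q.2 = sumf ff q.1] `<=` C1 `|` C2.
Proof.
move=> [[x y] z] [Dp /= ->]; have Kp := Dp.1.
have [/andP[x0 x1] /andP[y0 y1]] := @Kc_sub (x, y) Kp.
move: x0 x1 y0 y1 => /= x0 x1 y0 y1.
have eP : sumf ff (x, y) = Phi x by [].
rewrite eP.
have [xl|xg|xe] := ltgtP x (2^-1).
- left; split; first exact: ltW.
  have /= -> := @Kc_left (x, y) Kp xl; apply: sum1.
  by rewrite nd1 x0 xl.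
- right; split; first exact: ltW.
  have /= -> := @Kc_right (x, y) Kp xg.
  by rewrite /= Phi_half ?addr0 // ltW.
  rewrite /= xe Phi_half //.
  have [y0'|yp] := eqVneq y 0; first by right; split => /=; rewrite ?lexx ?y0' ?addr0.
  have [y1'|yn1] := eqVneq y 1; first by left; split => /=; rewrite ?lexx ?y1' ?addr0.
  exfalso; apply: (@Dmid y); last by move: Dp; rewrite xe.
  by rewrite lt_neqAle eq_sym yp y0 /= lt_neqAle yn1 y1.
Qed.

Lemma Ext_sub : Ext `<=` C1 `|` C2.
Proof.
move=> q [_ cq]; move: q cq; apply: closure_sub_closed; last exact: Gamf_sub.
by apply: closedU; [exact: C1_closed|exact: C2_closed].
Qed.

Lemma q0_in : (Ext `&` C1) ((0, G 0), Phi 0).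
Proof.
split.
  split; first by split; [exact: Df0.1|exact: Phi_range].
  by apply: subset_closure; split; [exact: Df0|].
by split => /=; [rewrite invr_ge0 ler0n|rewrite G0 Phi0 add0r].
Qed.

Lemma q1_in : (Ext `&` C2) ((1, 0), 0).
Proof.
split.
  split; first by split; [exact: Kc10|rewrite /unit_int /= lexx ler01].
  apply: subset_closure; split; first exact: Df1.
  by rewrite /= -(@Phi_half R 1) // ltW // half_lt1.
by split => /=; [rewrite ltW // half_lt1|rewrite addr0].
Qed.

Lemma Ext_disc : ~ connected Ext.
Proof.
apply/connectedPn.
exists (fun b => if b then Ext `&` C2 else Ext `&` C1); split.
- by case; [exists ((1, 0), 0); exact: q1_in|exists ((0, G 0), Phi 0); exact: q0_in].
- apply/seteqP; split; last by move=> q [[]|[]].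
  by move=> q Eq; case: (@Ext_sub q Eq) => H; [left|right].
- split; apply/seteqP; split => // q [].
    move=> cq [_ c2].
    have c1 := @closure_sub_closed _ (Ext `&` C1) C1 C1_closed (@subIsetr _ _ _) q cq.
    by rewrite -C12_disj.
  move=> [_ c1] cq.
  have c2 := @closure_sub_closed _ (Ext `&` C2) C2 C2_closed (@subIsetr _ _ _) q cq.
  by rewrite -C12_disj.
Qed.

End main.

Theorem theorem4p2 (R : realType) :
  exists (K : set (R * R)) (g : nat -> R -> R) (f : nat -> R * R -> R),
    [/\ (forall n, inC1 (@unit_int R) (g n)) /\ pw_disjoint (@unit_int R) g,
        K = extension (@unit_int R) g,
        compact K /\ connected K,
        (forall n, inC1 K (f n)) /\ pw_disjoint K f &
        ~ connected (extension K f)].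
Proof.
exists (Kc R), (@gg R), (@ff R); split.
- split.
    move=> n; split; first by apply: continuous_subspaceT; exact: h_cont.
    by move=> x _; rewrite /gg h_ge0 h_le1.
  by move=> n m /eqP nm x _; exact: gg_disj.
- by [].
- by split; [exact: Kc_compact|exact: Kc_conn].
- by split; [exact: ff_C1|exact: ff_disj].
- exact: Ext_disc.
Qed.
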